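(* For all $n,k\ge 0$, with $C_j=\frac{1}{j+1}\binom{2j}{j}$ the Catalan numbers, $$\frac{1}{n+1}\binom{2n+2}{n-k}\binom{n+k}{k}=\sum_{j=0}^{n}\binom{j}{k}\binom{n+k}{2j}2^{\,n+k-2j}C_j .$$ Equivalently, the Borel polynomials $B_n(y)=\sum_{k=0}^nB_{n,k}y^k$ are the image of the Catalan sequence under the (bivariate) Riordan array $\left(\frac{1}{1-2x},\frac{x(x+y)}{(1-2x)^2}\right)$.
   Context: A Riordan array $(g(x),f(x))$ with $g(0)\neq0$, $f(0)=0$, $f'(0)\ne0$ is the lower-triangular matrix with $(n,k)$ entry $[x^n]g(x)f(x)^k$; it acts on a sequence with generating function $h(x)$ to give the sequence with generating function $g(x)h(f(x))$. Binomial coefficients with lower index out of range are $0$. *)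

(* Defs.v *)
From HB Require Import structures.
From mathcomp Require Import all_boot all_order all_algebra.
Set Implicit Arguments. Unset Strict Implicit. Unset Printing Implicit Defensive.
Import Order.TTheory GRing.Theory Num.Theory.
Local Open Scope ring_scope.

Definition catalan (j : nat) : rat := ('C(j.*2, j))%:R / (j.+1)%:R.

(* Main.v *)
Require Import Defs.
From HB Require Import structures.
From mathcomp Require Import all_boot all_order all_algebra.
From mathcomp Require Import ring zify.
Import Order.TTheory GRing.Theory Num.Theory.
Local Open Scope ring_scope.

Lemma binX (a : rat) m : (a%:P + 'X : {poly rat})^+m =
  \sum_(i < m.+1) (('C(m,i))%:R * a ^+ (m - i)) *: 'X^i.
Proof.
rewrite exprDn; apply: eq_bigr => i _.
rewrite -rmorphXn mul_polyC -scaler_nat scalerA. done.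
Qed.

Lemma coef_binX (a : rat) m r : ((a%:P + 'X : {poly rat})^+m)`_r =
  ('C(m,r))%:R * a ^+ (m - r).
Proof.
rewrite binX coef_sumMXn /=. rewrite (big_ord1_eq _ (fun i => 'C(m,i)%:R * a ^+ (m-i))).
case: ltnP => // h; by rewrite bin_small ?mul0r.
Qed.

Lemma core N r : ('C(N.*2, r))%:R = \sum_(s < N.+1)
   (if (s <= r)%N then ('C(N,s) * 'C(s, r-s) * 2^(s-(r-s)))%N%:R else 0) :> rat.
Proof.
have := coef_binX 1 N.*2 r; rewrite expr1n mulr1 => <-.
have -> : ((1%:P + 'X : {poly rat}) ^+ N.*2) = (1 + 'X * (2%:R%:P + 'X))^+N.
  by rewrite -mul2n exprM; congr (_ ^+ _); rewrite polyC1 rmorph_nat; ring.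
rewrite exprDn coef_sum; apply: eq_bigr => s _.
rewrite expr1n mul1r coefMn exprMn coefXnM coef_binX.
case: leqP => h.
  rewrite !natrM natrX; ring.
by rewrite -mulr_natl mulr0.
Qed.

Lemma binf N m p : N = (m + p)%N ->
  'C(N,m)%:R = N`!%:R / (m`!%:R * p`!%:R) :> rat.
Proof.
move=> ->; rewrite -(bin_fact (leq_addr p m)) addKn natrM natrM mulfK //.
by rewrite mulf_neq0 // pnatr_eq0 -lt0n fact_gt0.
Qed.

Lemma term n k j : (k <= n)%N -> (j < n.+1)%N ->
  ('C(j,k) * 'C(n+k, j.*2) * 2^(n+k-j.*2))%N%:R * catalan j =
  ('C(n+k,k))%:R / (n.+1)%:R * (if (n-j <= n-k)%N then ('C(n.+1, n-j) * 'C(n-j, n-k-(n-j)) * 2^((n-j)-(n-k-(n-j))))%N%:R else 0) :> rat.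
Proof.
move=> kn jn; case: (ltnP j k) => jk.
  rewrite bin_small // !mul0n mul0r ifN ?mulr0 //; apply/negP; lia.
rewrite ifT; last lia.
case: (ltnP (n+k) j.*2) => hb.
  rewrite (bin_small hb) (@bin_small (n-j)); last lia.
  by rewrite !(mul0n,muln0,mul0r,mulr0).
have [a ea] : exists a, j = (k + a)%N by exists (j-k)%N; lia.
have [b eb] : exists b, n = (k + a + a + b)%N by exists (n + k - j.*2)%N; lia.
subst j n.
rewrite /catalan.
have -> : (k + a + a + b + k - (k + a).*2 = b)%N by lia.
have -> : (k + a + a + b - (k + a) = a + b)%N by lia.
have -> : (k + a + a + b - k - (a + b) = a)%N by lia.
have -> : (a + b - a = b)%N by lia.
rewrite !natrM !natrX.
rewrite (@binf (k+a) k a) // (@binf (k+a+a+b+k) ((k+a).*2) b); last lia.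
rewrite (@binf ((k+a).*2) (k+a) (k+a)); last lia.
rewrite (@binf (k+a+a+b+k) k (k+a+a+b)); last lia.
rewrite (@binf ((k+a+a+b).+1) (a+b) (k+a).+1); last lia.
rewrite (@binf (a+b) a b) //.
rewrite !factS !natrM.
have f0 : forall m, (m`!%:R : rat) != 0 by move=> m; rewrite pnatr_eq0 -lt0n fact_gt0.
have s0 : forall m, (m.+1%:R : rat) != 0 by move=> m; rewrite pnatr_eq0.
have s1 : forall m, (1 + m%:R : rat) != 0 by move=> m; rewrite addrC natr1 s0.
field.
by rewrite -!natrD !f0 !s1.
Qed.

Theorem mainTheorem5 (n k : nat) :
  ((if k <= n then 'C(n.*2.+2, n - k) * 'C(n + k, k) else 0)%N%:R / (n.+1)%:R : rat)
  = \sum_(0 <= j < n.+1)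
      ('C(j, k) * 'C(n + k, j.*2) * 2 ^ (n + k - j.*2))%N%:R * catalan j.
Proof.
case: (leqP k n) => kn.
  rewrite (@eq_big_nat _ _ _ 0 n.+1 _ _ (fun j hj => @term n k j kn (proj2 (andP hj)))).
  rewrite -mulr_sumr.
  have -> : n.*2.+2 = (n.+1).*2 by rewrite doubleS.
  rewrite natrM core big_ord_recr /= ifN; last by rewrite -ltnNge ltnS leq_subr.
  rewrite addr0 -(big_mkord xpredT (fun s => if (s <= n - k)%N then ('C(n.+1, s) * 'C(s, n - k - s) * 2 ^ (s - (n - k - s)))%N%:R else 0 : rat)).
  rewrite big_nat_rev /=.
  rewrite -mulrA mulrC; congr (_ * _).
rewrite big_mkord big1 ?mul0r // => j _.
by rewrite bin_small ?(leq_trans (ltn_ord j)) // !mul0n mul0r.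
Qed.
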